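(* Let $(P_t)_{t\ge0}$ be a measurable Markovian transition function on a Polish space $E$ with Borel $\sigma$-algebra $\mathcal{B}$, and let $m$ be a nonzero finite positive measure on $(E,\mathcal{B})$. Suppose there exists a sequence $t_n\nearrow\infty$ with $c((P_t)_t,m,(t_n)_n)<m(E)$. Then there exists a compact set $K\subset E$ such that $$\limsup_{t\to\infty}\frac1t\int_0^t m(P_s1_K)\,ds>0.$$
   Context: $c((P_t)_t,m,(t_n)_n):=\lim_{\varepsilon\searrow0}\sup_{A\in\mathcal{B},\,m(A)\le\varepsilon}\sup_n\frac1{t_n}\int_0^{t_n}m(P_s1_A)\,ds$. A measurable Markovian transition function is a family of Markovian kernels with $P_tP_s=P_{t+s}$ and $(t,x)\mapsto P_tf(x)$ jointly measurable. *)

(* Defs.v *)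
From HB Require Import structures.
From mathcomp Require Import all_boot all_order all_algebra.
From mathcomp Require Import all_classical all_reals all_analysis.
From mathcomp Require Import measurable_realfun.
Set Implicit Arguments. Unset Strict Implicit. Unset Printing Implicit Defensive.
Import Order.TTheory GRing.Theory Num.Theory.
Import numFieldNormedType.Exports.
Local Open Scope classical_set_scope.
Local Open Scope ring_scope.

(* A Polish space, given with a complete metric inducing its topology:
   Hausdorff (so a genuine metric), complete, and separable. *)
Definition polish_space (R : realType) (E : completePseudoMetricType R) : Prop :=
  hausdorff_space E /\ exists D : set E, countable D /\ dense D.

Notation borel E := (g_sigma_algebraType (@open E)).

Definition markov_transition_function (R : realType) (d : measure_display)
  (E : measurableType d) (P : R -> R.-pker E ~> E) : Prop :=
  (forall t s : R, 0 <= t -> 0 <= s -> forall (x : E) (A : set E),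
      measurable A -> P (t + s) x A = (\int[P t x]_y P s y A)%E) /\
  (forall f : E -> R, measurable_fun setT f ->
      (exists M : R, forall x, `|f x| <= M) ->
      measurable_fun ((`[(0:R), +oo[%classic : set R) `*` (setT : set E))
        (fun tx : R * E => (\int[P tx.1 tx.2]_y (f y)%:E)%E : \bar R)).

Definition mP (R : realType) (d : measure_display) (E : measurableType d)
  (P : R -> R.-pker E ~> E) (m : {measure set E -> \bar R}) (s : R) (A : set E)
  : \bar R := (\int[m]_x P s x A)%E.

Definition time_avg (R : realType) (d : measure_display) (E : measurableType d)
  (P : R -> R.-pker E ~> E) (m : {measure set E -> \bar R}) (t : R) (A : set E)
  : \bar R :=
  let I : set R := `[0, t]%classic in
  ((t^-1)%:E * \int[lebesgue_measure]_(s in I) mP P m s A)%E.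

Definition cP (R : realType) (d : measure_display) (E : measurableType d)
  (P : R -> R.-pker E ~> E) (m : {measure set E -> \bar R}) (tn : nat -> R)
  : \bar R :=
  lim ((fun eps : R =>
          ereal_sup [set ereal_sup [set time_avg P m (tn n) A | n in setT]
                    | A in [set A | measurable A /\ (m A <= eps%:E)%E]])
       @ 0^'+).

(* Main.v *)
Require Import Defs.
From HB Require Import structures.
From mathcomp Require Import all_boot all_order all_algebra.
From mathcomp Require Import all_classical all_reals all_analysis.
From mathcomp Require Import measurable_realfun.
From mathcomp Require Import ring.
Import Order.TTheory GRing.Theory Num.Theory.
Import numFieldNormedType.Exports.
Local Open Scope classical_set_scope.
Local Open Scope ring_scope.
Lemma ultra_bigU T (F : set_system T) (A : nat -> set T) N :
  UltraFilter F -> F (\bigcup_(i < N) A i) -> exists2 i, (i < N)%N & F (A i).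
Proof.
move=> FU; elim: N => [|N IH] FA.
  rewrite bigcup_mkord big_ord0 in FA.
  exfalso; exact: (@filter_not_empty _ F _ FA).
rewrite bigcup_mkord big_ord_recr /= -bigcup_mkord in FA.
case: (in_ultra_setVsetC (A N) FU) => [FAN|FnAN]; first by exists N.
have [|i iN Fi] := IH.
  apply: filterS (filterI FA FnAN).
  move=> x [[//|Ax] /(_ Ax)] //.
by exists i => //; exact: leqW.
Qed.

Lemma tb_compact (R : realType) (E : completePseudoMetricType R) (K : set E) :
  closed K ->
  (forall e : R, 0 < e -> exists N (p : nat -> E),
      K `<=` \bigcup_(i < N) ball (p i) e) -> compact K.
Proof.
move=> cK tb; rewrite compact_ultra => F FU FK.
have FF : ProperFilter F := @ultra_proper _ F FU.
have cF : cauchy F.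
  apply: cauchy_exP => e e0.
  have [N [p Kp]] := tb e e0.
  have [i _ Fi] := @ultra_bigU _ F _ _ FU (filterS Kp FK).
  by exists (p i).
have cvF := @cauchy_cvg _ F FF cF.
exists (lim F); split => //.
exact: (@closed_cvg _ _ F FF id K cK FK (lim F) cvF).
Qed.

Lemma open_mble (R : realType) (E : completePseudoMetricType R) (A : set E) :
  open A -> measurable (A : set (borel E)).
Proof. by move=> oA; apply: sub_sigma_algebra. Qed.

Lemma cover_int (R : realType) (E : completePseudoMetricType R) (D : set E)
  (e : nat -> E) : dense D -> D `<=` range e ->
  forall r : R, 0 < r -> forall z : E, exists i, interior (ball (e i) r) z.
Proof.
move=> dD De r r0 z.
have r20 : 0 < r / 2 by rewrite divr_gt0.
have [d [Od Dd]] := dD (interior (ball z (r/2)))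
   (ex_intro _ z (nbhsx_ballx z _ r20)) (@open_interior _ _).
have [i _ ei] := De d Dd.
exists i; rewrite /interior.
apply: filterS (nbhsx_ballx z (r/2) r20) => y zy.
rewrite ei (splitr r).
apply: ball_triangle zy.
by apply: ball_sym; apply: interior_subset.
Qed.

Lemma small_tail (R : realType) (E : completePseudoMetricType R)
  (m : {finite_measure set (borel E) -> \bar R}) (e : nat -> E) (r : R) :
  (forall z : E, exists i, interior (ball (e i) r) z) ->
  forall δ : R, 0 < δ -> exists N,
    (m (~` \bigcup_(i < N) interior (ball (e i) r)) <= δ%:E)%E.
Proof.
move=> cov δ δ0.
pose W N : set (borel E) := ~` \bigcup_(i < N) interior (ball (e i) r).
have mW N : measurable (W N).
  apply: measurableC; apply: bigcup_measurable => i _.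
  apply: open_mble. exact: open_interior.
have W0 : \bigcap_N W N = set0.
  apply/seteqP; split => // z Wz.
  have [i Hi] := cov z.
  have := Wz i.+1 I; apply; exists i => //=.
have cvW : m \o W @ \oo --> m (\bigcap_N W N).
  apply: nonincreasing_cvg_mu.
  - by rewrite ltey_eq fin_num_measure.
  - by [].
  - exact: bigcapT_measurable.
  - move=> a b ab; apply/subsetPset => z Wbz [i /= ia Hi]; apply: Wbz; exists i => //=.
    exact: leq_trans ia ab.
rewrite W0 measure0 in cvW.
apply: contrapT => /forallNP H.
have : (δ%:E <= 0)%E.
  apply: (cvge_to_ge cvW); apply: nearW => N /=.
  by have /negP := H N; rewrite -ltNge => /ltW.
by rewrite lee_fin leNgt δ0.
Qed.

Lemma tight (R : realType) (E : completePseudoMetricType R)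
  (m : {finite_measure set (borel E) -> \bar R}) (D : set E) :
  countable D -> dense D -> forall eps : R, 0 < eps ->
  exists K : set E, compact K /\ closed K /\ (m (~` K) <= eps%:E)%E.
Proof.
move=> cD dD eps eps0.
have [e De] : exists e : nat -> E, D `<=` range e.
  by have /pcard_surjP [g gs] := cD; exists g.
pose r k : R := (k.+1%:R)^-1.
have r0 k : 0 < r k by rewrite invr_gt0.
have hN k : exists N, (m (~` \bigcup_(i < N) interior (ball (e i) (r k)))
     <= (eps / (2 ^ k.+1)%:R)%:E)%E.
  apply: small_tail.
    exact: (@cover_int R E D e dD De (r k) (r0 k)).
  by rewrite divr_gt0.
have [N HN] := choice hN.
pose C k := closure (\bigcup_(i < N k) interior (ball (e i) (r k))).
exists (\bigcap_k C k).
have cK : closed (\bigcap_k C k).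
  by apply: closed_bigI => k _; exact: closed_closure.
split; [|split => //].
- apply: tb_compact => // e1 e10.
  have e20 : 0 < e1 / 2 by rewrite divr_gt0.
  case: (near_infty_natSinv_lt (PosNum e20)) => k _ Hk.
  have rk := Hk k (leqnn k); rewrite /= in rk.
  exists (N k), e => z Kz.
  have [y [[i ik Hi] zy]] := Kz k I (ball z (r k)) (nbhsx_ballx z _ (r0 k)).
  exists i => //.
  have : ball (e i) (r k + r k) z.
    apply: (ball_triangle (interior_subset Hi)).
    exact: ball_sym.
  apply: le_ball.
  by rewrite [e1]splitr lerD // ltW.
- rewrite setC_bigcap.
  have mC k : measurable (~` C k : set (borel E)).
    by apply: open_mble; apply: closed_openC; exact: closed_closure.
  apply: le_trans (measure_sigma_subadditive m mC (bigcupT_measurable _ mC) (@subset_refl _ _)) _.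
  apply: le_trans (epsilon_trick0 xpredT (ltW eps0)).
  apply: lee_nneseries => // k _.
  apply: le_trans (HN k).
  apply: le_measure; rewrite ?inE //.
    apply: measurableC; apply: bigcup_measurable => i _.
    by apply: open_mble; exact: open_interior.
  apply: subsetC; exact: subset_closure.
Qed.
Local Open Scope ereal_scope.
Lemma mP_mble (R : realType) (E : completePseudoMetricType R)
  (P : R -> R.-pker (borel E) ~> (borel E))
  (m : {finite_measure set (borel E) -> \bar R}) (A : set (borel E)) :
  markov_transition_function P -> measurable A ->
  measurable_fun (`[0%R, +oo[%classic : set R) (fun s => mP P m s A).
Proof.
move=> [_ HM] mA.
pose D : set (R * borel E) := `[0%R, +oo[%classic `*` setT.
have mD : measurable D by apply: measurableX => //; exact: measurable_itv.
have h := HM (\1_A) (@measurable_indic _ _ R setT _ mA).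
have {h} h : measurable_fun D (fun tx : R * borel E => P tx.1 tx.2 A).
  apply: eq_measurable_fun (h _) => [tx _|].
    by rewrite integral_indic// setIT.
  exists 1%R => x; rewrite indicE; case: (x \in A) => /=; by rewrite ?normr1 ?normr0.
pose g := (fun tx : R * borel E => P tx.1 tx.2 A) \_ D.
have mg : measurable_fun setT g by exact: (proj1 (measurable_restrictT _ mD) h).
have g0 : forall tx, 0 <= g tx.
  by move=> tx; rewrite /g /patch; case: ifP.
have Fg := measurable_fun_fubini_tonelli_F (m2 := m) g mg g0.
apply: eq_measurable_fun (measurable_funS _ (@subsetT _ _) Fg) => //.
move=> s; rewrite inE => s0; rewrite /fubini_F /mP.
apply: eq_integral => x _; rewrite /g /patch ifT //.
by rewrite inE; split.
Qed.

Lemma arith (R : realType) (a b : \bar R) (M t : R) : 0 <= a -> 0 <= b -> (0 < t)%R ->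
  a + b = (M * t)%:E -> (t^-1)%:E * a = M%:E - (t^-1)%:E * b.
Proof.
case: a => [a| |] //; case: b => [b| |] //= a0 b0 t0.
move=> [] H; rewrite -!EFinM -EFinB; congr EFin.
have tn0 : t != 0%R by rewrite gt_eqF.
have -> : a = (M * t - b)%R by rewrite -H addrK.
by field.
Qed.

Lemma mP_compl (R : realType) (E : completePseudoMetricType R)
  (P : R -> R.-pker (borel E) ~> (borel E))
  (m : {finite_measure set (borel E) -> \bar R}) (A : set (borel E)) s :
  measurable A -> mP P m s A + mP P m s (~` A) = m setT.
Proof.
move=> mA; rewrite /mP -ge0_integralD //; last first.
- exact: measurable_kernel (measurableC mA).
- exact: measurable_kernel.
transitivity (\int[m]_(x in setT) (cst 1 x)).
  apply: eq_integral => x _ /=.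
  rewrite -measureU ?setUv ?setICr //; [exact: prob_kernel|exact: measurableC].
by have := integral_cst m (@measurableT _ (borel E)) 1; rewrite mul1e.
Qed.

Lemma avg_compl (R : realType) (E : completePseudoMetricType R)
  (P : R -> R.-pker (borel E) ~> (borel E))
  (m : {finite_measure set (borel E) -> \bar R}) (A : set (borel E)) (t : R) :
  markov_transition_function P -> measurable A -> (0 < t)%R ->
  time_avg P m t A = m setT - time_avg P m t (~` A).
Proof.
move=> HP mA t0; rewrite /time_avg /=.
have mI : measurable (`[0%R, t]%classic : set R) by exact: measurable_itv.
have sub : (`[0%R, t]%classic : set R) `<=` `[0%R, +oo[%classic.
  by move=> s /=; rewrite !in_itv /= => /andP[-> _].
have mfA := measurable_funS (measurable_itv _) sub (@mP_mble _ _ P m A HP mA).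
have mfC := measurable_funS (measurable_itv _) sub (@mP_mble _ _ P m _ HP (measurableC mA)).
have fM : m setT = (fine (m setT))%:E by rewrite fineK // fin_num_measure.
have mP0 B s : 0 <= mP P m s B by apply: integral_ge0 => x _.
rewrite fM; apply: arith => //.
- by apply: integral_ge0 => s _.
- by apply: integral_ge0 => s _.
rewrite -ge0_integralD //.
under eq_integral do rewrite mP_compl //.
rewrite fM integral_cst //.
have Lt : lebesgue_measure (`[0%R,t]%classic : set R) = t%:E.
  by rewrite lebesgue_measure_itv /= lte_fin t0 sube0.
transitivity ((fine (m setT))%:E * t%:E); first by congr (_ * _); exact: Lt.
by rewrite -EFinM /=.
Qed.

Local Close Scope ereal_scope.

Theorem proposition3p2 (R : realType) (E : completePseudoMetricType R)
  (P : R -> R.-pker (borel E) ~> (borel E))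
  (m : {finite_measure set (borel E) -> \bar R}) (tn : nat -> R) :
  polish_space E ->
  markov_transition_function P ->
  m setT != 0%E ->
  {homo tn : i j / (i <= j)%N >-> i <= j} ->
  tn @ \oo --> +oo ->
  (cP P m tn < m setT)%E ->
  exists K : set E, compact K /\
    (0 < limf_esup (fun t : R => time_avg P m t K) +oo_R)%E.
Proof.
move=> [_ [D [cD dD]]] HP _ _ tnoo hc.
pose F (eps : R) := ereal_sup [set ereal_sup [set time_avg P m (tn n) A | n in setT]
                    | A in [set A | measurable A /\ (m A <= eps%:E)%E]].
have Fnd : {in Interval (BRight (0:R)) (BInfty R false) &,
           {homo F : n m / n <= m >-> (n <= m)%E}}.
  move=> a b _ _ ab; apply: le_ereal_sup => y [A [mA mAa] <-].
  exists A => //; split => //; apply: le_trans mAa _; by rewrite lee_fin.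
have cvF := @nondecreasing_at_right_cvge R F 0 (BInfty R false) isT Fnd.
have cPE : cP P m tn = ereal_inf [set F x | x in [set` Interval (BRight (0:R)) (BInfty R false)]].
  exact: (cvg_lim (@ereal_hausdorff R) cvF).
rewrite cPE in hc.
have [y [eps eps_in <-] Fm] := ereal_inf_lt hc.
have eps0 : 0 < eps by move: eps_in; rewrite /= in_itv /= andbT.
have [K [cK [clK mKe]]] := @tight R E m D cD dD eps eps0.
have mKC : measurable (~` K : set (borel E)) by apply: open_mble; exact: closed_openC.
have mK : measurable (K : set (borel E)) by rewrite -(setCK K); exact: measurableC.
have bound n : (time_avg P m (tn n) (~` K) <= F eps)%E.
  apply: (@le_trans _ _ (ereal_sup [set time_avg P m (tn k) (~` K) | k in setT])).
    by apply: ereal_sup_ubound; exists n.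
  by apply: ereal_sup_ubound; exists (~` K) => //; split.
exists K; split => //.
have tavg0 t A : 0 < t -> (0 <= time_avg P m t A)%E.
  move=> t0; rewrite /time_avg /=; apply: mule_ge0; first by rewrite lee_fin invr_ge0 ltW.
  by apply: integral_ge0 => s _; apply: integral_ge0.
have tpos : \forall n \near \oo, 0 < tn n.
  by apply: (tnoo [set x | 0 < x]); apply: nbhs_pinfty_gt; exact: real0.
have [n0 tn0] := filter_ex tpos.
have fM : m setT = (fine (m setT))%:E by rewrite fineK // fin_num_measure.
have afin : F eps = (fine (F eps))%:E.
  rewrite fineK // ge0_fin_numE.
    by apply: lt_trans Fm _; rewrite fM ltry.
  exact: le_trans (tavg0 _ _ tn0) (bound n0).
set ra := fine (F eps); set Mr := fine (m setT).
have c0 : 0 < Mr - ra by move: Fm; rewrite afin fM lte_fin subr_gt0.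
apply: (@lt_le_trans _ _ (Mr - ra)%:E); first by rewrite lte_fin.
rewrite /limf_esup; apply: le_ereal_inf_tmp => _ [V HV <-].
have HV' : \forall n \near \oo, V (tn n) := tnoo V HV.
have [n [Vn tn0']] := filter_ex (filterI HV' tpos).
apply: le_ereal_sup_tmp; exists (time_avg P m (tn n) K); first by exists (tn n).
rewrite (@avg_compl R E P m K (tn n) HP mK tn0') fM.
have := bound n; rewrite afin.
move: (tavg0 (tn n) (~` K) tn0').
move: (time_avg P m (tn n) (~` K)) => -[x| |] //= x0 xa.
by rewrite -EFinB lee_fin lerB //; rewrite lee_fin in xa.
Qed.
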